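(* Let $\mathbf{L}=(L,\le)$ be a finite nontrivial join-semilattice with greatest element $1$ and let $(R,\vee,\circ)$ be a subsemiring of $(\mathrm{JM}(\mathbf{L}),\vee,\circ)$ such that $k_a\in R$ for all $a\in L$, every $f\in R$ satisfies $k_a\le f$ for some $a\in L$, and for all $a\in L$, $b\in L\setminus\{1\}$ there exists $f\in R$ with $f(x)=b$ for $x\le a$ and $f(x)>b$ otherwise. Then $(R,\vee)$ has a neutral element if and only if $\mathbf{L}$ is a lattice. If this neutral element exists, it is left but not right absorbing in $(R,\vee,\circ)$.
   Context: $\mathrm{JM}(\mathbf{L})$ is the set of maps $L\to L$ preserving binary joins, a semiring under pointwise join and composition, ordered pointwise; $k_a$ is the constant map with value $a$. A finite join-semilattice is a lattice iff it has a least element. An element $r$ is right absorbing if $s\circ r=r$ for all $s\in R$, left absorbing if $r\circ s=r$ for all $s\in R$. *)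

(* Defs.v *)
From mathcomp Require Import all_boot all_order.
Set Implicit Arguments. Unset Strict Implicit. Unset Printing Implicit Defensive.
Import Order.TTheory.
Local Open Scope order_scope.

Section JM.
Context {d : Order.disp_t} {L : finTJoinSemilatticeType d}.

Definition join_morph (f : {ffun L -> L}) : Prop :=
  forall x y : L, f (x `|` y) = f x `|` f y.

Definition fjoin (f g : {ffun L -> L}) : {ffun L -> L} := [ffun x => f x `|` g x].
Definition fcomp (f g : {ffun L -> L}) : {ffun L -> L} := [ffun x => f (g x)].

Definition kconst (a : L) : {ffun L -> L} := [ffun => a].

Definition fle (f g : {ffun L -> L}) : Prop := forall x, f x <= g x.

Definition subsemiring_JM (R : {set {ffun L -> L}}) : Prop :=
  [/\ R != set0,
      (forall f, f \in R -> join_morph f),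
      (forall f g, f \in R -> g \in R -> fjoin f g \in R) &
      (forall f g, f \in R -> g \in R -> fcomp f g \in R)].

Definition join_neutral (R : {set {ffun L -> L}}) (e : {ffun L -> L}) : Prop :=
  e \in R /\ forall f, f \in R -> fjoin e f = f /\ fjoin f e = f.

Definition right_absorbing (R : {set {ffun L -> L}}) (r : {ffun L -> L}) : Prop :=
  forall s, s \in R -> fcomp s r = r.
Definition left_absorbing (R : {set {ffun L -> L}}) (r : {ffun L -> L}) : Prop :=
  forall s, s \in R -> fcomp r s = r.

End JM.

Definition is_lattice {d : Order.disp_t} (L : finTJoinSemilatticeType d) : Prop :=
  forall x y : L, exists m : L,
    [/\ m <= x, m <= y & forall z : L, z <= x -> z <= y -> z <= m].

(* Main.v *)
Require Import Defs.
From mathcomp Require Import all_boot all_order.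
Import Order.TTheory.
Local Open Scope order_scope.

Section Aux.
Context {d : Order.disp_t} {L : finTJoinSemilatticeType d}.

Lemma lower_seq (H : is_lattice L) (s : seq L) :
  exists m : L, forall w, w \in s -> m <= w.
Proof.
elim: s => [|a s [m Hm]]; first by exists \top.
have [m' [h1 h2 h3]] := H m a.
exists m' => w; rewrite in_cons => /orP [/eqP -> //|/Hm]; exact: le_trans.
Qed.

Lemma fold_le (x z : L) (s : seq L) :
  z <= x -> (forall w, w \in s -> w <= x) -> foldr Order.join z s <= x.
Proof.
elim: s => [//|a s IH] hz hs /=; rewrite leUx hs ?mem_head //=.
by apply: IH => // w ws; apply: hs; rewrite in_cons ws orbT.
Qed.

Lemma le_fold (z w : L) (s : seq L) : w \in s -> w <= foldr Order.join z s.
Proof.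
elim: s => [//|a s IH]; rewrite in_cons => /orP [/eqP ->|ws] /=.
  exact: leUl.
by apply: lexUr; apply: IH.
Qed.

Lemma bot_lattice (z : L) : (forall a : L, z <= a) -> is_lattice L.
Proof.
move=> hz x y.
pose s := [seq w <- enum L | (w <= x) && (w <= y)].
exists (foldr Order.join z s); split.
- apply: fold_le => // w; rewrite mem_filter => /andP [/andP [] //].
- apply: fold_le => // w; rewrite mem_filter => /andP [/andP [] //].
- move=> w wx wy; apply: le_fold; by rewrite mem_filter wx wy mem_enum.
Qed.
End Aux.

Theorem proposition7p2 (d : Order.disp_t) (L : finTJoinSemilatticeType d)
  (R : {set {ffun L -> L}}) :
  (1 < #|L|)%N ->
  subsemiring_JM R ->
  (forall a : L, kconst a \in R) ->
  (forall f, f \in R -> exists a : L, fle (kconst a) f) ->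
  (forall a b : L, b != \top -> exists2 f, f \in R &
     forall x : L, (x <= a -> f x = b) /\ (~~ (x <= a) -> b < f x)) ->
  ((exists e, join_neutral R e) <-> is_lattice L) /\
  (forall e, join_neutral R e -> left_absorbing R e /\ ~ right_absorbing R e).
Proof.
move=> hcard _ hk hlow _.
have eleq : forall e, join_neutral R e -> forall x a, e x <= a.
  move=> e [_ he] x a; have [h _] := he _ (hk a).
  have := congr1 (fun f : {ffun L -> L} => f x) h.
  by rewrite /fjoin /kconst !ffunE => /join_idPr.
split; first split.
- move=> [e he]; apply: (@bot_lattice _ _ (e \top)) => a; exact: eleq.
- move=> H; have [z hz] := lower_seq H (enum L).
  have hz' : forall a, z <= a by move=> a; apply: hz; rewrite mem_enum.
  exists (kconst z); split; first exact: hk.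
  move=> f fR; have [a ha] := hlow f fR.
  have hf : forall x, z <= f x.
    move=> x; apply: le_trans (hz' a) _; have := ha x; by rewrite /kconst ffunE.
  split; apply/ffunP => x; rewrite /fjoin /kconst !ffunE.
    exact/join_idPr.
  exact/join_idPl.
move=> e he; split.
  move=> s sR; apply/ffunP => x; rewrite /fcomp ffunE.
  by apply: le_anti; rewrite !eleq.
move=> hra; have := hra _ (hk \top).
move/(congr1 (fun f : {ffun L -> L} => f \top)); rewrite /fcomp /kconst !ffunE => et.
have : forall a : L, a = \top.
  by move=> a; apply: le_anti; rewrite lex1 et eleq.
move=> all1; move: hcard.
have -> : #|L| = 1%N.
  rewrite -(card1 (\top : L)); apply: eq_card => x.
  by rewrite !inE (all1 x) eqxx.
by [].
Qed.
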